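(* Let $\bar a>0$ and $b>0$ be real constants and consider the system of ordinary differential equations on $\mathbb{R}^3$ \begin{align*} \dot q_1 &= q_1\,[\bar a - 2b q_1 - b q_2 - b q_3],\\ \dot q_2 &= q_2\,[\bar a - b q_1 - 2b q_2 - b q_3],\\ \dot q_3 &= q_3\,[\bar a - b q_1 - b q_2 - 2b q_3]. \end{align*} Let $E_8$ denote the equilibrium of this system all of whose coordinates are strictly positive (the Cournot equilibrium, $E_8=(q^*,q^*,q^* )$ with $q^*=\bar a/(4b)$). Then $E_8$ is a stable node.
   Context: This system models a Cournot triopoly of identical firms with linear inverse demand $p=a-bQ$, $Q=q_1+q_2+q_3$, identical linear cost $C(q_i)=c+dq_i$, $\bar a=a-d$, and gradient (bounded rationality) adjustment with unit speed; $q_i$ is the output of firm $i$. A stable node is a hyperbolic equilibrium whose linearization has only real, strictly negative eigenvalues. *)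

(* Defs.v *)
From HB Require Import structures.
From mathcomp Require Import all_boot all_order all_algebra.
From mathcomp Require Import all_classical all_reals.
From mathcomp Require Import topology normedtype derive.
From mathcomp.real_closed Require complex.
Import complex.ComplexEqChoice complex.ComplexField.
Set Implicit Arguments. Unset Strict Implicit. Unset Printing Implicit Defensive.
Import Order.TTheory GRing.Theory Num.Theory.
Import numFieldNormedType.Exports.
Local Open Scope ring_scope.

(* Gradient-adjustment Cournot triopoly vector field on R^3 (row vectors):
   qdot_i = q_i * (abar - b * q_i - b * (q_1 + q_2 + q_3)),
   i.e. qdot_1 = q_1 [abar - 2 b q_1 - b q_2 - b q_3], etc. *)
Definition triopoly_field (R : realType) (abar b : R) (q : 'rV[R]_3) : 'rV[R]_3 :=
  \row_(i < 3) (q ord0 i * (abar - b * q ord0 i - b * \sum_(j < 3) q ord0 j)).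

Definition is_equilibrium (R : realType) (f : 'rV[R]_3 -> 'rV[R]_3) (x : 'rV[R]_3) :=
  f x = 0.

Definition cplx_mx (R : realType) (n : nat) (A : 'M[R]_n) : 'M[complex.complex R]_n :=
  map_mx (fun r : R => complex.Complex r 0) A.

Definition stable_node (R : realType) (f : 'rV[R]_3 -> 'rV[R]_3) (x : 'rV[R]_3) :=
  [/\ is_equilibrium f x, differentiable f x &
      forall z : complex.complex R, eigenvalue (cplx_mx ('J f x)) z ->
        complex.Im z = 0 /\ complex.Re z < 0].

(* Main.v *)
Require Import Defs.
From HB Require Import structures.
From mathcomp Require Import all_boot all_order all_algebra.
From mathcomp Require Import all_classical all_reals.
From mathcomp Require Import topology normedtype derive.
From mathcomp.real_closed Require complex.
From mathcomp Require Import ring lra.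
Import complex.ComplexEqChoice complex.ComplexField.
Import Order.TTheory GRing.Theory Num.Theory.
Import numFieldNormedType.Exports.
Local Open Scope ring_scope.

Section S.
Variable R : realType.
Definition i0 : 'I_3 := ord0.
Definition i1 : 'I_3 := @Ordinal 3 1 isT.
Definition i2 : 'I_3 := @Ordinal 3 2 isT.
Lemma ord3P (i : 'I_3) : i = i0 \/ i = i1 \/ i = i2.
Proof.
case: i => [[|[|[|m]]] Hm].
- by left; apply: val_inj.
- by right; left; apply: val_inj.
- by right; right; apply: val_inj.
- by [].
Qed.
Lemma sum3 (F : 'I_3 -> R) : \sum_j F j = F i0 + F i1 + F i2.
Proof.
rewrite !big_ord_recr big_ord0 /= add0r.
congr (_ + _ + _); congr F; apply: val_inj => //.
Qed.

Definition pc (i : 'I_3) := fun N : 'rV[R]_3 => N ord0 i.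

Lemma is_diff_coord (x : 'rV[R]_3) i : is_diff x (pc i) (pc i).
Proof.
have @f : {linear 'rV[R]_3 -> R}.
  by exists (fun N : 'rV[R]_(_) => N ord0 i); do 2![eexists]; do ?[constructor];
     rewrite ?mxE// => ? *; rewrite ?mxE//; move=> ?; rewrite !mxE.
rewrite (_ : pc i = f) //.
apply: DiffDef; first exact/linear_differentiable/coord_continuous.
by rewrite diff_lin //; apply: coord_continuous.
Qed.

Lemma is_diffZl (x : 'rV[R]_3) (k dk : 'rV[R]_3 -> R) (e : 'rV[R]_3) :
  is_diff x k dk -> is_diff x (fun z => k z *: e) (fun z => dk z *: e).
Proof.
move=> H; apply: DiffDef; first exact: differentiableZl.
by rewrite diffZl // diff_val.
Qed.
Variables abar b : R.
Definition gg (i : 'I_3) : 'rV[R]_3 -> R :=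
  cst abar - b *: pc i - b *: (pc i0 + pc i1 + pc i2).
Definition kk i := pc i * gg i.
Lemma sE : forall r s : R, r *: s = r * s. Proof. by []. Qed.
Lemma fieldE : triopoly_field abar b =
  (fun q => kk i0 q *: delta_mx 0 i0) + (fun q => kk i1 q *: delta_mx 0 i1)
  + (fun q => kk i2 q *: delta_mx 0 i2).
Proof.
apply: funext => q; apply/rowP => j.
rewrite /triopoly_field !mxE sum3 /kk /gg /pc /= !fctE !sE.
have [->|[->|->]] := ord3P j => /=; ring.
Qed.

Definition dkk (x : 'rV[R]_3) i (z : 'rV[R]_3) :=
  x ord0 i * (- b * z ord0 i - b * (z ord0 i0 + z ord0 i1 + z ord0 i2))
  + gg i x * z ord0 i.

Lemma dk (x : 'rV[R]_3) (i : 'I_3) : is_diff x (kk i) (dkk x i).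
Proof.
have H0 := is_diff_coord x i0. have H1 := is_diff_coord x i1.
have H3 := is_diff_coord x i2. have H4 := is_diff_coord x i.
eapply is_diff_eq.
  rewrite /kk /gg.
  eapply is_diffM. exact: H4. eapply is_diffB. eapply is_diffB.
  exact: is_diff_cst. eapply is_diffZ. exact: H4. eapply is_diffZ.
  eapply is_diffD. eapply is_diffD. exact: H0. exact: H1. exact: H3.
apply: funext => z; rewrite /dkk /gg /pc /= !fctE !sE.
rewrite (_ : (0 : _ -> R) z = 0) //; ring.
Qed.
Definition dff (x z : 'rV[R]_3) : 'rV[R]_3 :=
  dkk x i0 z *: delta_mx 0 i0 + dkk x i1 z *: delta_mx 0 i1 + dkk x i2 z *: delta_mx 0 i2.

Lemma dfield x : is_diff x (triopoly_field abar b) (dff x).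
Proof.
rewrite fieldE; eapply is_diff_eq.
  eapply is_diffD; first eapply is_diffD.
  - exact: is_diffZl (dk x i0).
  - exact: is_diffZl (dk x i1).
  - exact: is_diffZl (dk x i2).
by apply: funext => z; rewrite /dff !fctE.
Qed.
End S.
Lemma Jentry (R : realType) (abar b : R) (hb : 0 < b) k j :
  let c := abar / (4 * b) in
  'J (triopoly_field abar b) (const_mx c) k j = - (b * c) * ((k == j)%:R + 1).
Proof.
move=> c.
have hb4 : 4 * b != 0 by rewrite mulf_neq0 // gt_eqF.
have g0 : forall i, gg R abar b i (const_mx c) = 0.
  move=> i; rewrite /gg /pc !fctE !mxE !sE /c. field. by rewrite gt_eqF.
have dE := @diff_val _ _ _ _ _ _ _ (dfield R abar b (const_mx c)).
rewrite /jacobian /lin1_mx mxE dE.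
rewrite /dff /dkk !g0 !mxE.
have [->|[->|->]] := ord3P k; have [->|[->|->]] := ord3P j; rewrite /=; ring.
Qed.

Lemma sum3g (V : nmodType) (F : 'I_3 -> V) : \sum_j F j = F i0 + F i1 + F i2.
Proof.
rewrite !big_ord_recr big_ord0 /= add0r.
congr (_ + _ + _); congr F; apply: val_inj => //.
Qed.

Lemma eig3 (R : realType) (r : R) (hr : r < 0) (M : 'M[R]_3)
  (hM : forall k j, M k j = r * ((k == j)%:R + 1)) (z : complex.complex R) :
  eigenvalue (cplx_mx M) z -> complex.Im z = 0 /\ complex.Re z < 0.
Proof.
move/eigenvalueP => [v /rowP Hv vnz].
set W := complex.real_complex R r.
have Mij : forall k j, cplx_mx M k j = W * ((k == j)%:R + 1).
  move=> k j; rewrite mxE hM.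
  have rc : forall s : R, complex.Complex s 0 = complex.real_complex R s by [].
  by rewrite rc rmorphM rmorphD rmorph_nat rmorph1.
have eq_j : forall j, \sum_k v 0 k * (W * ((k == j)%:R + 1)) = z * v 0 j.
  move=> j; have := Hv j; rewrite !mxE => <-.
  by apply: eq_bigr => k _; rewrite Mij.
have e0 := eq_j i0; have e1 := eq_j i1; have e2 := eq_j i2.
rewrite !sum3g /= in e0 e1 e2.
move: e0 e1 e2; set x0 := v 0 i0; set x1 := v 0 i1; set x2 := v 0 i2 => e0 e1 e2.
have eS : (W * 4 - z) * (x0 + x1 + x2) = 0.
  have -> : (W * 4 - z) * (x0 + x1 + x2) =
    (x0 * (W * (1 + 1)) + x1 * (W * (0 + 1)) + x2 * (W * (0 + 1)) - z * x0) +
    (x0 * (W * (0 + 1)) + x1 * (W * (1 + 1)) + x2 * (W * (0 + 1)) - z * x1) +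
    (x0 * (W * (0 + 1)) + x1 * (W * (0 + 1)) + x2 * (W * (1 + 1)) - z * x2).
    by ring.
  by rewrite e0 e1 e2 !subrr !addr0.
have [S0|SN] := eqVneq (x0 + x1 + x2) 0.
  have hz : forall y, (W - z) * y = 0 -> y = 0 \/ z = W.
    move=> y /eqP; rewrite mulf_eq0 subr_eq0 => /orP [/eqP ->|/eqP ->]; by [right|left].
  have h0 : (W - z) * x0 = 0.
    have -> : (W - z) * x0 =
      (x0 * (W * (1 + 1)) + x1 * (W * (0 + 1)) + x2 * (W * (0 + 1)) - z * x0) - W * (x0 + x1 + x2) by ring.
    by rewrite e0 S0 subrr mulr0 subr0.
  have h1 : (W - z) * x1 = 0.
    have -> : (W - z) * x1 =
      (x0 * (W * (0 + 1)) + x1 * (W * (1 + 1)) + x2 * (W * (0 + 1)) - z * x1) - W * (x0 + x1 + x2) by ring.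
    by rewrite e1 S0 subrr mulr0 subr0.
  have h2 : (W - z) * x2 = 0.
    have -> : (W - z) * x2 =
      (x0 * (W * (0 + 1)) + x1 * (W * (0 + 1)) + x2 * (W * (1 + 1)) - z * x2) - W * (x0 + x1 + x2) by ring.
    by rewrite e2 S0 subrr mulr0 subr0.
  have zW : z = W.
    case: (hz _ h0) => // z0; case: (hz _ h1) => // z1; case: (hz _ h2) => // z2.
    exfalso; move/eqP: vnz; apply; apply/rowP => j; rewrite mxE.
    by have [->|[->|->]] := ord3P j.
  by rewrite zW.
have z4 : z = complex.real_complex R (r * 4).
  rewrite rmorphM rmorph_nat -/W.
  by move/eqP: eS; rewrite mulf_eq0 (negbTE SN) orbF subr_eq0 => /eqP <-.
rewrite z4 /=; split => //; lra.
Qed.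

Theorem theorem1 (R : realType) (abar b : R) (habar : 0 < abar) (hb : 0 < b) :
  (exists x : 'rV[R]_3,
     (forall i, 0 < x ord0 i) /\ is_equilibrium (triopoly_field abar b) x) /\
  (forall x : 'rV[R]_3,
     (forall i, 0 < x ord0 i) -> is_equilibrium (triopoly_field abar b) x ->
     x = const_mx (abar / (4 * b)) /\ stable_node (triopoly_field abar b) x).
Proof.
set c := abar / (4 * b).
have hb0 : b != 0 by rewrite gt_eqF.
have hb4 : 4 * b != 0 by rewrite mulf_neq0 // gt_eqF.
have c0 : 0 < c by rewrite /c divr_gt0 // mulr_gt0.
have eqc : is_equilibrium (triopoly_field abar b) (const_mx c).
  rewrite /is_equilibrium /triopoly_field; apply/rowP => j.
  rewrite !mxE sum3 !mxE /c; field; exact: hb0.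
split.
  by exists (const_mx c); split => // i; rewrite mxE.
move=> x xpos xeq.
have E : forall i, abar - b * x ord0 i - b * (x ord0 i0 + x ord0 i1 + x ord0 i2) = 0.
  move=> i; move/rowP: xeq => /(_ i); rewrite !mxE sum3 => /eqP.
  by rewrite mulf_eq0 (gt_eqF (xpos i)) /= => /eqP.
have xc : forall i, x ord0 i = c.
  have E0 := E i0; have E1 := E i1; have E2 := E i2.
  set y0 := x ord0 i0 in E0 E1 E2 *; set y1 := x ord0 i1 in E0 E1 E2 *;
  set y2 := x ord0 i2 in E0 E1 E2 *.
  have dif : forall u w, abar - b * u - b * (y0 + y1 + y2) = 0 ->
      abar - b * w - b * (y0 + y1 + y2) = 0 -> u = w.
    move=> u w Eu Ew.
    have : b * (u - w) = 0.
      have -> : b * (u - w) = (abar - b * w - b * (y0 + y1 + y2)) - (abar - b * u - b * (y0 + y1 + y2)) by ring.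
      by rewrite Eu Ew subr0.
    by move/eqP; rewrite mulf_eq0 (negbTE hb0) /= subr_eq0 => /eqP.
  have e01 := dif _ _ E0 E1; have e02 := dif _ _ E0 E2.
  have yc : y0 = c.
    apply: (mulIf hb4); rewrite /c divfK //.
    have -> : y0 * (4 * b) = abar - (abar - b * y0 - b * (y0 + y1 + y2)) by rewrite -e01 -e02; ring.
    by rewrite E0 subr0.
  move=> i; have [->|[->|->]] := ord3P i; rewrite -/y0 -/y1 -/y2 //.
  - by rewrite -e01.
  - by rewrite -e02.
have xC : x = const_mx c by apply/rowP => j; rewrite mxE xc.
split => //; subst x.
split => //.
  have := dfield R abar b (const_mx c). by case.
move=> z; apply: (@eig3 R (- (b * c))).
  by rewrite oppr_lt0 mulr_gt0.
by move=> k j; rewrite Jentry.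
Qed.
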